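(* Let $p\ge1$, let $(X,d_X),(Y,d_Y),(Z,d_Z)$ be pseudo-metric spaces, and let $(W,\mu)$, $(V,\gamma)$ be probability spaces. Let $f(x;w):X\times W\to Y$ be $\alpha$ lower-Hölder in expectation and $g(y;v):Y\times V\to Z$ be $\beta$ lower-Hölder in expectation, with $\alpha,\beta\ge1$. Then $(g\circ f)(x;w,v)=g(f(x;w);v)$, with $(w,v)$ distributed according to the product measure $\mu\times\gamma$, is $\alpha\beta$ lower-Hölder in expectation. Moreover, if $f$ and $g$ are uniformly Lipschitz, then so is $g\circ f$.
   Context: A parametric function $f(x;w)$ (measurable in $w$ for each fixed $x$) with a probability measure on parameters is $\alpha$ lower-Hölder in expectation if there is $c>0$ such that $c^p\le \mathbb{E}_{w}\left[\left(\frac{d_Y(f(x;w),f(x';w))}{d_X(x,x')^\alpha}\right)^p\right]$ for all $x,x'$ with $d_X(x,x')>0$. It is uniformly Lipschitz if there is $L>0$ such that $x\mapsto f(x;w)$ is $L$-Lipschitz for every parameter $w$. *)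

(* Defs.v *)
From HB Require Import structures.
From mathcomp Require Import all_boot all_order all_algebra.
From mathcomp Require Import all_classical all_reals all_analysis.
Set Implicit Arguments. Unset Strict Implicit. Unset Printing Implicit Defensive.
Import Order.TTheory GRing.Theory Num.Theory.
Local Open Scope ring_scope.

Record pseudo_metric (R : realType) (T : Type) := PseudoMetric {
  pm_dist :> T -> T -> R;
  pm_ge0 : forall x y, 0 <= pm_dist x y;
  pm_refl : forall x, pm_dist x x = 0;
  pm_sym : forall x y, pm_dist x y = pm_dist y x;
  pm_triangle : forall x y z, pm_dist x z <= pm_dist x y + pm_dist y z }.

Definition lower_holder_exp (R : realType) (X Y : Type)
    (dX : pseudo_metric R X) (dY : pseudo_metric R Y)
    (dW : measure_display) (W : measurableType dW) (P : probability W R)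
    (f : X -> W -> Y) (alpha p : R) : Prop :=
  exists2 c : R, 0 < c &
    forall x x' : X, 0 < dX x x' ->
      ((c `^ p)%:E <=
        \int[P]_w (((dY (f x w) (f x' w)) / (dX x x') `^ alpha) `^ p)%:E)%E.

Definition uniformly_lipschitz (R : realType) (X Y W : Type)
    (dX : pseudo_metric R X) (dY : pseudo_metric R Y) (f : X -> W -> Y) : Prop :=
  exists2 L : R, 0 < L &
    forall (w : W) (x x' : X), dY (f x w) (f x' w) <= L * dX x x'.

Definition comp_param (X Y Z W V : Type) (f : X -> W -> Y) (g : Y -> V -> Z)
  : X -> W * V -> Z := fun x wv => g (f x wv.1) wv.2.

(* Main.v *)
Require Import Defs.
From HB Require Import structures.
From mathcomp Require Import all_boot all_order all_algebra.
From mathcomp Require Import all_classical all_reals all_analysis.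
From mathcomp Require Import ring lra.
Import measurable_realfun.
Import Order.TTheory GRing.Theory Num.Theory.
Local Open Scope ring_scope.

Lemma powRVl (R : realType) (a r : R) : 0 <= a -> (a^-1) `^ r = (a `^ r)^-1.
Proof.
move=> a0; rewrite -powR_inv1 // -powRrM mulrC powRrM powR_inv1 //.
exact: powR_ge0.
Qed.

Lemma powR_divl (R : realType) (a b r : R) : 0 <= a -> 0 <= b ->
  (a / b) `^ r = a `^ r / b `^ r.
Proof.
move=> a0 b0; rewrite powRM ?invr_ge0 // powRVl //.
Qed.

Lemma tangent_powR (R : realType) (b t h : R) : 1 <= b -> 0 < t -> 0 <= h ->
  b * t `^ (b - 1) * h <= h `^ b + (b - 1) * t `^ b.
Proof.
move=> b1 t0 h0.
have [->|bne1] := eqVneq b 1.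
  by rewrite subrr powRr0 powRr1 // !mul1r mul0r addr0.
have b1' : 1 < b by rewrite lt_neqAle eq_sym bne1 b1.
have bm0 : 0 < b - 1 by rewrite subr_gt0.
have b0 : 0 < b by apply: lt_trans b1'.
have q0 : 0 < b / (b - 1) by rewrite divr_gt0.
have := @conjugate_powR R h (t `^ (b - 1)) b (b / (b - 1)) h0 (powR_ge0 _ _)
  b0 q0.
rewrite -powRrM mulrCA divff ?gt_eqF // mulr1.
have -> : b^-1 + (b / (b - 1))^-1 = 1.
  by rewrite invf_div; field; rewrite gt_eqF.
move=> /(_ erefl) H.
have := ler_wpM2l (ltW b0) H.
set A := h `^ b; set B := t `^ b; set C := t `^ (b - 1).
have E1 : b * C * h = b * (h * C) by ring.
have E2 : b * (A / b + B / (b / (b - 1))) = A + (b - 1) * B.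
  by field; rewrite !gt_eqF.
by rewrite E1 -E2.
Qed.

Lemma int_pow_lb (R : realType) d (T : measurableType d) (P : probability T R)
  (h : T -> R) (b t : R) :
  1 <= b -> 0 < t -> measurable_fun setT h -> (forall x, 0 <= h x) ->
  (t%:E <= \int[P]_x (h x)%:E)%E -> ((t `^ b)%:E <= \int[P]_x (h x `^ b)%:E)%E.
Proof.
move=> b1 t0 mh h0 Ht.
have b0 : 0 < b by apply: lt_le_trans b1.
have mhb : measurable_fun setT (fun x => h x `^ b).
  exact: measurableT_comp (measurable_powR _) mh.
have I0 : (0 <= \int[P]_x (h x `^ b)%:E)%E by apply: integral_ge0 => x _; rewrite lee_fin powR_ge0.
have k0 : 0 <= b * t `^ (b - 1) by rewrite mulr_ge0 ?powR_ge0 // ltW.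
have c0 : 0 <= (b - 1) * t `^ b by rewrite mulr_ge0 ?powR_ge0 // subr_ge0.
have key : ((b * t `^ (b - 1))%:E * \int[P]_x (h x)%:E
    <= \int[P]_x (h x `^ b)%:E + ((b - 1) * t `^ b)%:E)%E.
  rewrite -ge0_integralZl_EFin //; last 2 first.
  - by move=> x _; rewrite lee_fin.
  - exact/measurable_EFinP.
  rewrite [X in (_ <= X)%E](_ : _

      = \int[P]_x ((h x `^ b)%:E + ((b - 1) * t `^ b)%:E))%E; last first.
    rewrite ge0_integralD //; try (by move=> x _; rewrite lee_fin ?powR_ge0);
      try exact/measurable_EFinP.
    rewrite integral_cst //; congr (_ + _)%E; rewrite -[LHS]mule1.
    congr (_ * _)%E; symmetry; exact: probability_setT.
  apply: (@ge0_le_integral _ _ _ P) => //.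
  - by move=> x _; rewrite lee_fin mulr_ge0.
  - by apply: measurable_funeM; exact/measurable_EFinP.
  - by apply: emeasurable_funD => //; exact/measurable_EFinP.
  - by move=> x _; rewrite -EFinM -EFinD lee_fin; exact: tangent_powR.
have key2 := le_trans (lee_wpmul2l (k0 : (0 <= (b * t `^ (b - 1))%:E)%E) Ht) key.
move: I0 key2; case: (\int[P]_x (h x `^ b)%:E)%E => [r| |] //= _.
rewrite -EFinM -EFinD !lee_fin -mulrA (mulrC _ t) mulr_powRB1 ?(ltW t0) //.
by move=> H; lra.
by move=> _; rewrite leey.
Qed.

Theorem mainTheorem5 (R : realType) (p alpha beta : R)
    (X Y Z : Type) (dX : pseudo_metric R X) (dY : pseudo_metric R Y)
    (dZ : pseudo_metric R Z)
    (dW : measure_display) (W : measurableType dW) (mu : probability W R)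
    (dV : measure_display) (V : measurableType dV) (gamma : probability V R)
    (f : X -> W -> Y) (g : Y -> V -> Z) :
  1 <= p -> 1 <= alpha -> 1 <= beta ->
  (* standing measurability assumptions making the expectations meaningful *)
  (forall x x' : X, measurable_fun setT (fun w => dY (f x w) (f x' w))) ->
  (forall y y' : Y, measurable_fun setT (fun v => dZ (g y v) (g y' v))) ->
  (forall x x' : X, measurable_fun setT
     (fun wv : W * V => dZ (comp_param f g x wv) (comp_param f g x' wv))) ->
  lower_holder_exp dX dY mu f alpha p ->
  lower_holder_exp dY dZ gamma g beta p ->
  lower_holder_exp dX dZ (mu \x gamma)%E (comp_param f g) (alpha * beta) p /\
  (uniformly_lipschitz dX dY f -> uniformly_lipschitz dY dZ g ->
   uniformly_lipschitz dX dZ (comp_param f g)).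
Proof.
move=> p1 a1 b1 mfY mgZ mcomp [cf cf0 Hf] [cg cg0 Hg].
have p0 : 0 < p by apply: lt_le_trans p1.
have a0 : 0 < alpha by apply: lt_le_trans a1.
have b0 : 0 < beta by apply: lt_le_trans b1.
split; last first.
  move=> [Lf Lf0 HLf] [Lg Lg0 HLg]; exists (Lg * Lf); first exact: mulr_gt0.
  move=> [w v] x x'; rewrite /comp_param /=.
  apply: le_trans (HLg v _ _) _; rewrite -mulrA; apply: ler_wpM2l.
  - exact: ltW.
  - exact: HLf.
apply: (@ex_intro2 _ _ _ (cg * cf `^ beta)); first by rewrite mulr_gt0 // powR_gt0.
move=> x x' dxx.
set dd := dX x x'.
pose G := fun wv : W * V =>
  (dZ (comp_param f g x wv) (comp_param f g x' wv) / dd `^ (alpha * beta)) `^ p.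
have mG : measurable_fun setT G.
  apply: measurableT_comp (measurable_powR _) _.
  by apply: measurable_funM => //; exact: measurable_cst.
have G0 : forall wv, 0 <= G wv by move=> wv; exact: powR_ge0.
rewrite (@fubini_tonelli1 _ _ _ _ _ mu gamma (fun wv => (G wv)%:E)); last 2 first.
- exact/measurable_EFinP.
- by move=> wv; rewrite lee_fin.
pose h := fun w => (dY (f x w) (f x' w) / dd `^ alpha) `^ p.
have mh : measurable_fun setT h.
  apply: measurableT_comp (measurable_powR _) _.
  by apply: measurable_funM => //; exact: measurable_cst.
have h0 : forall w, 0 <= h w by move=> w; exact: powR_ge0.
have J := @int_pow_lb R _ _ mu h beta (cf `^ p) b1 (powR_gt0 _ cf0) mh h0 (Hf x x' dxx).
have inner : forall w,
    ((cg `^ p * h w `^ beta)%:E <= fubini_F gamma (fun wv => (G wv)%:E) w)%E.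
  move=> w; rewrite /fubini_F.
  set D := dY (f x w) (f x' w).
  have [D0|Dpos] : D = 0 \/ 0 < D.
    have := pm_ge0 dY (f x w) (f x' w); rewrite -/D le_eqVlt => /predU1P[H|H].
      by left.
    by right.
  - have -> : h w = 0 by rewrite /h -/D D0 mul0r powR0 // gt_eqF.
    rewrite powR0 ?gt_eqF // mulr0.
    by apply: integral_ge0 => v _; rewrite lee_fin.
  - have Hg' := Hg _ _ Dpos.
    pose Zv := fun v => dZ (g (f x w) v) (g (f x' w) v).
    have E : forall v, G (w, v) = h w `^ beta * (Zv v / D `^ beta) `^ p.
      move=> v; rewrite /h -/D powRAC powR_divl ?powR_ge0 ?(pm_ge0 dY) // -(powRrM dd alpha beta).
      rewrite -powRM ?divr_ge0 ?powR_ge0 //; last exact: pm_ge0.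
      rewrite /G /comp_param /=; congr (_ `^ p).
      rewrite /Zv -/dd; field.
      by rewrite !gt_eqF ?powR_gt0.
    under eq_integral do rewrite E EFinM.
    rewrite ge0_integralZl_EFin //; last 3 first.
    - by move=> v _; rewrite lee_fin powR_ge0.
    - apply/measurable_EFinP; apply: measurableT_comp (measurable_powR _) _.
      by apply: measurable_funM; [exact: mgZ | exact: measurable_cst].
    - exact: powR_ge0.
    by rewrite EFinM muleC; apply: lee_wpmul2l => //; rewrite lee_fin powR_ge0.
apply: (le_trans (_ : _ <= (cg `^ p)%:E * \int[mu]_w (h w `^ beta)%:E)%E).
  rewrite (powRM _ (ltW cg0) (powR_ge0 _ _)) (powRAC cf beta p) EFinM.
  by apply: lee_wpmul2l => //; rewrite lee_fin powR_ge0.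
rewrite -ge0_integralZl_EFin //; last 3 first.
- by move=> w _; rewrite lee_fin powR_ge0.
- apply/measurable_EFinP; exact: measurableT_comp (measurable_powR _) mh.
- exact: powR_ge0.
apply: ge0_le_integral => //.
- by move=> w _; rewrite -EFinM lee_fin mulr_ge0 ?powR_ge0.
- apply/measurable_EFinP; apply: measurable_funM; first exact: measurable_cst.
  exact: measurableT_comp (measurable_powR _) mh.
- apply: measurable_fun_fubini_tonelli_F.
  + exact/measurable_EFinP.
  + by move=> wv; rewrite lee_fin.
- by move=> w _; rewrite -EFinM; exact: inner.
Qed.
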